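(* Consider the following convex (second-order cone) optimal control problem for $N$ electric vehicles (EVs) charged through a single transformer over $K$ time steps $k=0,\dots,K-1$. The decision variables are the charging currents $i_n(k)$, states of charge $s_n(k+1)$ ($n=1,\dots,N$), total currents $i_{\text{total}}(k)$, auxiliary variables $e(k)$, and transformer temperatures $T(k+1)$: \begin{align*} \min\;& \sum_{n=1}^N\sum_{k=0}^{K-1} q_n\,(s_n(k+1)-1)^2 + r_n\,(i_n(k))^2\\ \text{s.t. }& T(k+1)=\tau T(k)+\gamma e(k)+\rho T_a(k),\\ & e(k)\ge (i_{\text{total}}(k))^2,\\ & s_n(k+1)=s_n(k)+\eta_n i_n(k),\\ & i_{\text{total}}(k)=i_d(k)+\sum_{n=1}^N i_n(k),\\ & T(k+1)\le T^{\max},\\ & s_n(k+1)\in[\hat s_n(k+1),\,1],\\ & i_n(k)\in[0,\,i_n^{\max}],\\ & T(0)=T_{\text{meas}},\quad s_n(0)=s_{\text{meas},n}, \end{align*} for all $k=0,\dots,K-1$ and $n=1,\dots,N$. Fix EV parameters $r_n\ge 0$ and $\eta_n,q_n>0$. When $r_n>0$, let $M_n\doteq \frac{q_n}{r_n}\eta_n^2$. Suppose that at an optimal solution of this problem there exist an index $n$ and a time step $k$ such that $i_n(k)<i_n^{\max}$ and $$s_n(k+1)<\begin{cases}1 & \text{if } r_n=0,\\[2pt] \dfrac{M_n+s_n(0)}{M_n+1} & \text{if } r_n>0.\end{cases}$$ Then $e(l)=(i_{\text{total}}(l))^2$ for all $l\le k$.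
   Context: The problem arises from a discrete-time transformer hot-spot temperature model $T(k+1)=\tau T(k)+\gamma (i_{\text{total}}(k))^2+\rho T_a(k)$, in which the quadratic equality has been relaxed to the epigraph inequality $e(k)\ge (i_{\text{total}}(k))^2$. The parameters are as follows: - $\tau=e^{-b\Delta t}\in(0,1)$ for some $b,\Delta t>0$, and $\rho=1-\tau$; - $\gamma>0$; - $T_a(k)$ is a given (shifted) ambient temperature sequence; - $i_d(k)\ge 0$ is a given background current; - $T^{\max}$ is the transformer temperature limit; - $i_n^{\max}>0$ is the current limit of EV $n$; - $\eta_n>0$ is the normalized charging ratio of EV $n$; - $s_{\text{meas},n}\in[0,1]$ is the measured initial state of charge and $T_{\text{meas}}$ the measured initial temperature; - $\hat s_n(k+1)=\bar s_n$ if $k+1\ge \bar k_n$ and $\hat s_n(k+1)=0$ otherwise, where $\bar s_n\in[0,1]$ is a minimum required state of charge and $\bar k_n\in\{0,\dots,K\}$ the latest time step by which it must be reached. *)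

(* Defs.v *)
From HB Require Import structures.
From mathcomp Require Import all_boot all_order all_algebra.
From mathcomp Require Import all_classical all_reals all_analysis.
Set Implicit Arguments. Unset Strict Implicit. Unset Printing Implicit Defensive.
Import Order.TTheory GRing.Theory Num.Theory.
Local Open Scope ring_scope.

Section EVDefs.
Variable R : realType.

(* Minimum required state of charge: hat s_n(k) = sbar_n if k >= kbar_n, else 0.
   It is applied at time k+1 in the constraints. *)
Definition shat (sbar : R) (kbar : nat) (k : nat) : R :=
  if (kbar <= k)%N then sbar else 0.

(* Feasible set of the relaxed (SOCP) problem.  Decision variables are
   i n k, s n k, itot k, e k, T k; only indices k < K (resp. k+1 <= K) matter. *)
Definition ev_feasible (N K : nat) (tau gamma rho : R) (Ta id_ : nat -> R)
  (Tmax : R) (imax eta sbar : 'I_N -> R) (kbar : 'I_N -> nat)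
  (smeas : 'I_N -> R) (Tmeas : R)
  (i s : 'I_N -> nat -> R) (itot e T : nat -> R) : Prop :=
  (forall k, (k < K)%N -> T k.+1 = tau * T k + gamma * e k + rho * Ta k) /\
      (forall k, (k < K)%N -> itot k ^+ 2 <= e k) /\
      (forall n k, (k < K)%N -> s n k.+1 = s n k + eta n * i n k) /\
      (forall k, (k < K)%N -> itot k = id_ k + \sum_(n < N) i n k) /\
      (forall k, (k < K)%N -> T k.+1 <= Tmax) /\
      (forall n k, (k < K)%N ->
        shat (sbar n) (kbar n) k.+1 <= s n k.+1 <= 1) /\
      (forall n k, (k < K)%N -> 0 <= i n k <= imax n) /\
      T 0%N = Tmeas /\
      (forall n, s n 0%N = smeas n).

Definition ev_cost (N K : nat) (q r : 'I_N -> R) (i s : 'I_N -> nat -> R) : R :=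
  \sum_(n < N) \sum_(k < K) (q n * (s n k.+1 - 1) ^+ 2 + r n * (i n k) ^+ 2).

Definition ev_optimal (N K : nat) (tau gamma rho : R) (Ta id_ : nat -> R)
  (Tmax : R) (imax eta sbar : 'I_N -> R) (kbar : 'I_N -> nat)
  (smeas : 'I_N -> R) (Tmeas : R) (q r : 'I_N -> R)
  (i s : 'I_N -> nat -> R) (itot e T : nat -> R) : Prop :=
  ev_feasible K tau gamma rho Ta id_ Tmax imax eta sbar kbar smeas Tmeas i s itot e T /\
  forall (i' s' : 'I_N -> nat -> R) (itot' e' T' : nat -> R),
    ev_feasible K tau gamma rho Ta id_ Tmax imax eta sbar kbar smeas Tmeas
      i' s' itot' e' T' ->
    ev_cost K q r i s <= ev_cost K q r i' s'.

Definition soc_threshold (qn rn etan sn0 : R) : R :=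
  if rn == 0 then 1
  else let M := qn / rn * etan ^+ 2 in (M + sn0) / (M + 1).

End EVDefs.

(* Main.v *)
Require Import Defs.
From HB Require Import structures.
From mathcomp Require Import all_boot all_order all_algebra.
From mathcomp Require Import all_classical all_reals all_analysis.
From mathcomp Require Import ring lra zify.
Import Order.TTheory GRing.Theory Num.Theory.
Local Open Scope ring_scope.

Fixpoint dseq {R : realType} (tau gamma : R) (de : nat -> R) (m : nat) : R :=
  match m with 0%N => 0 | m'.+1 => tau * dseq tau gamma de m' + gamma * de m' end.

Lemma sum_add1 {R : realType} N (F : 'I_N -> R) n0 c :
  \sum_(n < N) (F n + (if n == n0 then c else 0)) = \sum_(n < N) F n + c.
Proof.
rewrite big_split /=; congr (_ + _).
rewrite (bigD1 n0) //= eqxx big1 ?addr0 //.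
by move=> n hn; rewrite (negbTE hn).
Qed.

Lemma sum_ge1 {R : realType} N (F : 'I_N -> R) n0 :
  (forall n, 0 <= F n) -> F n0 <= \sum_(n < N) F n.
Proof.
move=> h; rewrite (bigD1 n0) //= lerDl; apply: sumr_ge0 => n _; exact: h.
Qed.

Lemma sum_ind2 {R : realType} N K (n0 : 'I_N) k (A : R) : (k < K)%N ->
  \sum_(n < N) \sum_(m < K) (if n == n0 then (if (m : nat) == k then A else 0) else 0) = A.
Proof.
move=> hk; rewrite (bigD1 n0) //= [X in _ + X]big1 ?addr0; last first.
  by move=> n hn; rewrite (negbTE hn) big1.
rewrite eqxx (bigD1 (Ordinal hk)) //= eqxx big1 ?addr0 // => m hm.
case: eqP => // hmk; case/eqP: hm; apply: val_inj => /=; exact: hmk.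
Qed.

Lemma small_eps {R : realType} (al be : R) : 0 <= al -> 0 < be ->
  0 < be / (al + 1) /\ forall x, 0 <= x -> x <= be / (al + 1) -> al * x + x <= be.
Proof.
move=> ha hb; split; first by apply: divr_gt0 => //; lra.
move=> x hx; rewrite ler_pdivlMr; [nra | lra].
Qed.

Lemma two_min {R : realType} (x y : R) : 0 < x -> 0 < y ->
  exists e, [/\ 0 < e, e <= x & e <= y].
Proof.
move=> hx hy; exists (Num.min x y).
have := lexx (Num.min x y); rewrite le_min => /andP[h1 h2].
by split => //; rewrite lt_min hx hy.
Qed.

Lemma sq_le1 {R : realType} (s x : R) : s <= x -> x <= 1 -> (x - 1) ^+ 2 <= (s - 1) ^+ 2.
Proof. move=> h1 h2; rewrite !expr2; nra. Qed.

Lemma sq_le2 {R : realType} (y z : R) : 0 <= y -> y <= z -> y ^+ 2 <= z ^+ 2.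
Proof. move=> h1 h2; rewrite !expr2; nra. Qed.

Theorem theorem1 (R : realType) (N K : nat) (b dt gamma : R)
  (Ta id_ : nat -> R) (Tmax : R) (imax eta q r sbar smeas : 'I_N -> R)
  (kbar : 'I_N -> nat) (Tmeas : R)
  (i s : 'I_N -> nat -> R) (itot e T : nat -> R) :
  0 < b -> 0 < dt -> 0 < gamma ->
  (forall k, 0 <= id_ k) ->
  (forall n, 0 < imax n) ->
  (forall n, 0 < eta n) ->
  (forall n, 0 < q n) ->
  (forall n, 0 <= r n) ->
  (forall n, 0 <= sbar n <= 1) ->
  (forall n, (kbar n <= K)%N) ->
  (forall n, 0 <= smeas n <= 1) ->
  ev_optimal K (expR (- (b * dt))) gamma (1 - expR (- (b * dt))) Ta id_ Tmax
    imax eta sbar kbar smeas Tmeas q r i s itot e T ->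
  forall (n : 'I_N) (k : nat), (k < K)%N ->
    i n k < imax n ->
    s n k.+1 < soc_threshold (q n) (r n) (eta n) (s n 0%N) ->
    forall l : nat, (l <= k)%N -> e l = itot l ^+ 2.
Proof.
move=> hb hdt hg hid himax heta hq hr hsbar hkbar hsm [hfeas hopt] n k hk hik hsk l hl.
have hfeas' := hfeas.
case: hfeas' => [hT [he [hs [hit [hTm [hsb [hi [hT0 hs0]]]]]]]].
set tau := expR (- (b * dt)) in hopt hT.
have htau : 0 < tau by apply: expR_gt0.
have hi0 : forall n' m, (m < K)%N -> 0 <= i n' m by move=> n' m hm; case/andP: (hi n' m hm).
have hi1 : forall n' m, (m < K)%N -> i n' m <= imax n' by move=> n' m hm; case/andP: (hi n' m hm).
have hs1 : forall n' m, (m < K)%N -> s n' m.+1 <= 1 by move=> n' m hm; case/andP: (hsb n' m hm).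
have [hlt|hge] := ltrP (itot l ^+ 2) (e l); last first.
  have := he l (leq_ltn_trans hl hk); lra.
exfalso.
have hlK : (l < K)%N by exact: (leq_ltn_trans hl hk).
set sig := e l - itot l ^+ 2.
have hsig : 0 < sig by rewrite /sig subr_gt0.
have smono : forall m, (m <= K)%N -> s n 0%N <= s n m.
  elim=> [|m IH] hm //; rewrite hs //.
  have h1 := hi0 n m hm; have h2 := IH (ltnW hm); have h3 := heta n.
  by clear -h1 h2 h3; nra.
have hsk1 : s n 0%N + eta n * i n k <= s n k.+1.
  rewrite hs //; have := smono k (ltnW hk); lra.
have hs01 : s n 0%N <= 1 by rewrite hs0; case/andP: (hsm n).
have hik0 := hi0 n k hk.
have hetan := heta n.
have hqn := hq n.
have [ha hc] : 0 < 1 - s n k.+1 /\ r n * i n k < q n * eta n * (1 - s n k.+1).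
  move: hsk; rewrite /soc_threshold.
  case: eqP => [->|/eqP hr0] /= hlt'.
    split; first lra.
    have h0 := mulr_gt0 hqn hetan; clear -h0 hlt'; nra.
  have hrn : 0 < r n by rewrite lt_def hr0 hr.
  set M := q n / r n * eta n ^+ 2 in hlt'.
  have hM : 0 <= M by rewrite /M; apply: mulr_ge0; [apply: divr_ge0; lra | apply: sqr_ge0].
  have hrM : r n * M = q n * eta n ^+ 2 by rewrite /M; field; apply/eqP; lra.
  move: hlt'; rewrite ltr_pdivlMr; last lra.
  move=> hlt'.
  have h1 : s n k.+1 < 1 by clear -hlt' hs01 hM; nra.
  split; first lra.
  have h2 : eta n * (r n * i n k) < eta n * (q n * eta n * (1 - s n k.+1)).
    have h3 : r n * (eta n * i n k) <= r n * (s n k.+1 - s n 0%N).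
      by rewrite ler_pM2l //; lra.
    have h4 : r n * (s n k.+1 - s n 0%N) < r n * (M * (1 - s n k.+1)).
      by rewrite ltr_pM2l //; lra.
    have h5 : r n * (M * (1 - s n k.+1)) = eta n * (q n * eta n * (1 - s n k.+1)).
      by rewrite mulrA hrM; ring.
    have h6 : r n * (eta n * i n k) = eta n * (r n * i n k) by ring.
    lra.
  by rewrite ltr_pM2l in h2.
set a := 1 - s n k.+1 in ha hc.
set c := q n * eta n * a - r n * i n k.
have hcpos : 0 < c by rewrite /c; lra.
have exP : exists j, (k < j)%N && ((j == K) || (0 < i n j)).
  by exists K; rewrite hk eqxx.
case: (ex_minnP exP) => j /andP [hkj hPj] hmin.
have hjK : (j <= K)%N by apply: hmin; rewrite hk eqxx.
have hjpos : (j < K)%N -> 0 < i n j.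
  by move=> hjlt; move: hPj; rewrite (ltn_eqF hjlt).
have hzero : forall m, (k < m)%N -> (m < j)%N -> i n m = 0.
  move=> m h1 h2; have hmK : (m < K)%N by clear -h2 hjK; lia.
  have : ~~ ((k < m)%N && ((m == K) || (0 < i n m))).
    apply/negP => hP; have h3 := hmin m hP; clear -h3 h2; lia.
  rewrite h1 /= (ltn_eqF hmK) /= -leNgt => h0; have := hi0 n m hmK; lra.
have sconst : forall t, (k.+1 + t <= j)%N -> s n (k.+1 + t)%N = s n k.+1.
  elim=> [|t IH] ht; first by rewrite addn0.
  rewrite addnS hs; last by clear -ht hjK; lia.
  rewrite hzero; [|clear; lia|clear -ht; lia]. rewrite mulr0 addr0 IH //; clear -ht; lia.
have sconst' : forall m, (k < m)%N -> (m <= j)%N -> s n m = s n k.+1.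
  move=> m h1 h2; have := sconst (m - k.+1)%N; rewrite subnKC //; apply; clear -h1 h2; lia.
set ij := if (j < K)%N then i n j else 1.
have hij : 0 < ij by rewrite /ij; case: ifP => // /hjpos.
have hitk : 0 <= itot k.
  rewrite hit //; apply: addr_ge0 => //; apply: sumr_ge0 => n' _; exact: hi0.
set tk := tau ^+ (k - l).
have htk : 0 < tk by apply: exprn_gt0.
have [x1p x1h] := small_eps _ _ (mulr_ge0 (ler0n R 2) hitk) (mulr_gt0 hsig htk).
have hQ : 0 <= q n * eta n ^+ 2 + r n.
  by apply: addr_ge0 => //; apply: mulr_ge0; [lra | apply: sqr_ge0].
have [x2p x2h] := small_eps _ _ hQ hcpos.
have [x3p x3h] := small_eps _ _ (ltW hetan) ha.
have hx4 : 0 < imax n - i n k by rewrite subr_gt0.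
have [e1 [e1p e1a e1b]] := two_min _ _ x1p x2p.
have [e2 [e2p e2a e2b]] := two_min _ _ e1p x3p.
have [e3 [e3p e3a e3b]] := two_min _ _ e2p hx4.
have [e4 [e4p e4a e4b]] := two_min _ _ e3p hij.
have [eps [heps eps4 eps1]] := two_min _ _ e4p (@ltr01 R).
have heps0 := ltW heps.
have epsD : 2%:R * itot k * eps + eps <= sig * tk.
  apply: x1h => //; apply: (le_trans eps4); apply: (le_trans e4a); apply: (le_trans e3a).
  by apply: (le_trans e2a).
have epsc : (q n * eta n ^+ 2 + r n) * eps + eps <= c.
  apply: x2h => //; apply: (le_trans eps4); apply: (le_trans e4a); apply: (le_trans e3a).
  by apply: (le_trans e2a).
have epsa : eta n * eps + eps <= a.
  apply: x3h => //; apply: (le_trans eps4); apply: (le_trans e4a); exact: (le_trans e3a).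
have epsi : eps <= imax n - i n k.
  apply: (le_trans eps4); exact: (le_trans e4a).
have epsj : eps <= ij by apply: (le_trans eps4).
clear x1h x2h x3h e1a e1b e2a e2b e3a e3b e4a e4b eps4 e1p e2p e3p e4p x1p x2p x3p.
pose D := (itot k + eps) ^+ 2 - itot k ^+ 2.
have hD : D <= sig * tk.
  have h1 : eps ^+ 2 <= eps by rewrite expr2; clear -heps0 eps1; nra.
  rewrite /D; clear -h1 epsD; rewrite !expr2 in h1 *; nra.
pose e' := fun m : nat => e m - (if m == l then sig else 0) + (if m == k then D else 0).
pose dd := dseq tau gamma (fun m => e' m - e m).
have ddS : forall m, dd m.+1 = tau * dd m + gamma * (e' m - e m) by [].
have hem : forall m, e' m - e m = - (if m == l then sig else 0) + (if m == k then D else 0).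
  by move=> m; rewrite /e'; ring.
have dinv : forall m, dd m <= 0 /\
    ((l < m)%N -> (m <= k)%N -> dd m <= - (gamma * sig * tau ^+ (m - l.+1))).
  elim=> [|m [IH1 IH2]].
    split; first by rewrite /dd /=.
    by move=> h; exfalso; clear -h; lia.
  rewrite ddS hem.
  case: (ltngtP m l) => hml.
  - have -> : (m == k) = false by clear -hml hl; lia.
    rewrite oppr0 add0r mulr0 addr0; split; first by clear -IH1 htau; nra.
    by move=> h; exfalso; clear -h hml; lia.
  - rewrite oppr0 add0r.
    case: (ltngtP m k) => hmk.
    + rewrite mulr0 addr0; split; first by clear -IH1 htau; nra.
      move=> _ _; have h := IH2 hml (ltnW hmk).
      have -> : (m.+1 - l.+1)%N = (m - l.+1).+1 by clear -hml; lia.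
      rewrite exprS; move: h; set P := tau ^+ (m - l.+1) => h.
      by clear -h htau; nra.
    + rewrite mulr0 addr0; split; first by clear -IH1 htau; nra.
      by move=> _ h; exfalso; clear -h hmk; lia.
    + subst m; split; last by move=> _ h; exfalso; clear -h; lia.
      have h := IH2 hml (leqnn k).
      have etk : tk = tau * tau ^+ (k - l.+1).
        by rewrite /tk -exprS; congr (_ ^+ _); clear -hml; lia.
      move: h etk; set P := tau ^+ (k - l.+1) => h etk.
      rewrite etk in hD.
      by clear -h htau hD hg; nra.
  - subst m; case: (eqVneq l k) => [hlk|hlk].
    + have etk : tk = 1 by rewrite /tk hlk subnn expr0.
      split; last by move=> _ h; exfalso; clear -h hlk; lia.
      rewrite etk mulr1 in hD; clear -IH1 htau hD hg; nra.
    + rewrite addr0 subnn expr0 mulr1; split; first by clear -IH1 htau hg hsig; nra.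
      by move=> _ _; clear -IH1 htau hg hsig; nra.
pose i' := fun (n' : 'I_N) (m : nat) => i n' m +
  (if n' == n then (if m == k then eps else 0) - (if m == j then eps else 0) else 0).
pose itot' := fun m : nat => itot m + ((if m == k then eps else 0) - (if m == j then eps else 0)).
pose s' := fun (n' : 'I_N) (m : nat) => s n' m +
  (if n' == n then (if (k < m)%N && (m <= j)%N then eta n * eps else 0) else 0).
pose T' := fun m : nat => T m + dd m.
have hetae : 0 <= eta n * eps by apply: mulr_ge0; [exact: ltW|].
have F1 : forall m, (m < K)%N -> s n m.+1 <= s' n m.+1 <= 1.
  move=> m hm; rewrite /s' eqxx; case: ifP => h.
    move/andP: h => [h1 h2]; rewrite sconst' //; apply/andP; split; first lra.
    by rewrite /a in epsa; lra.
  by rewrite addr0 lexx /=; exact: hs1.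
have F2 : forall m, (m < K)%N -> (m != k) -> 0 <= i' n m <= i n m.
  move=> m hm hmk; rewrite /i' eqxx (negbTE hmk) sub0r; case: eqP => hmj.
    subst m; have hj := hjpos hm; have eij : ij = i n j by rewrite /ij hm.
    by apply/andP; split; lra.
  by rewrite oppr0 addr0 lexx andbT; exact: hi0.
have feas : ev_feasible K tau gamma (1 - tau) Ta id_ Tmax imax eta sbar kbar
    smeas Tmeas i' s' itot' e' T'.
  split.
    by move=> m hm; rewrite /T' ddS hT //; ring.
  split.
    move=> m hm; rewrite /e' /itot'.
    case: (eqVneq m k) => [->|hmk].
      rewrite (ltn_eqF hkj) subr0.
      case: (eqVneq k l) => [hkl|hkl].
        by rewrite /sig /D hkl; lra.
      by rewrite subr0; have := he k hk; rewrite /D; lra.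
    rewrite addr0 sub0r; case: (eqVneq m j) => [hmj|hmj].
      subst m; have -> : (j == l) = false by clear -hl hkj; lia.
      rewrite subr0; have hj := hjpos hm; have eij : ij = i n j by rewrite /ij hm.
      have itj : i n j <= itot j.
        rewrite hit //; have := hid j.
        have := sum_ge1 _ (fun n' => i n' j) n (fun n' => hi0 n' j hm); lra.
      have hej := he j hm.
      have h1 : 0 <= eps <= itot j by apply/andP; split; lra.
      clear -h1 hej; move/andP: h1 => [h1 h2]; rewrite !expr2 in hej *; nra.
    rewrite oppr0 addr0; case: eqP => [hml|_].
      by rewrite hml /sig; lra.
    by rewrite subr0; exact: he.
  split.
    move=> n' m hm; rewrite /s' /i' hs //; case: eqP => [->|_]; last by rewrite !addr0.
    case: (ltngtP m k) => hmk.
    - have c1 : (k < m.+1)%N = false by clear -hmk; lia.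
      have c2 : (m == j) = false by clear -hmk hkj; lia.
      by rewrite c1 c2 /=; ring.
    - have c1 : (k < m.+1)%N = true by clear -hmk; lia.
      rewrite c1 /=.
      case: (ltngtP m j) => hmj /=; try ring.
    - subst m; rewrite ltnSn hkj (ltn_eqF hkj) /=; ring.
  split.
    move=> m hm; rewrite /itot' /i' hit // (sum_add1 _ (fun n' => i n' m)).
    ring.
  split.
    move=> m hm; rewrite /T'; have := hTm m hm; have := (dinv m.+1).1; lra.
  split.
    move=> n' m hm; case: (eqVneq n' n) => [->|hn].
      have /andP[h1 h2] := hsb n m hm; have /andP[h3 h4] := F1 m hm.
      by apply/andP; split; [exact: le_trans h1 h3 | exact: h4].
    by rewrite /s' (negbTE hn) addr0; exact: hsb.
  split.
    move=> n' m hm; case: (eqVneq n' n) => [->|hn]; last first.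
      by rewrite /i' (negbTE hn) addr0; exact: hi.
    case: (eqVneq m k) => [->|hmk].
      rewrite /i' !eqxx (ltn_eqF hkj) subr0; apply/andP; split; lra.
    have /andP[h1 h2] := F2 m hm hmk; have := hi1 n m hm.
    by move=> h3; apply/andP; split; lra.
  split.
    by rewrite /T' /dd /= addr0.
  by move=> n'; rewrite /s' ltn0 /= hs0; case: (n' == n); rewrite addr0.
have hc' := hopt i' s' itot' e' T' feas.
pose A := q n * ((s n k.+1 + eta n * eps - 1) ^+ 2 - (s n k.+1 - 1) ^+ 2) +
  r n * ((i n k + eps) ^+ 2 - i n k ^+ 2).
have hA : A < 0.
  have -> : A = eps * ((q n * eta n ^+ 2 + r n) * eps - 2%:R * c).
    by rewrite /A /c /a; ring.
  by rewrite pmulr_rlt0 //; lra.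
have hcost : ev_cost K q r i' s' <= ev_cost K q r i s + A.
  rewrite /ev_cost -(sum_ind2 N K n k A hk) -big_split /=.
  apply: ler_sum => n' _; rewrite -big_split /=; apply: ler_sum => m _.
  have hm := ltn_ord m.
  case: (eqVneq n' n) => [->|hn]; last first.
    by rewrite /s' /i' (negbTE hn) !addr0 lexx.
  rewrite ?eqxx; case: (eqVneq (m : nat) k) => [hmk|hmk].
    rewrite /s' /i' ?eqxx hmk eqxx ltnSn hkj (ltn_eqF hkj) /= subr0 /A; lra.
  rewrite addr0.
  have /andP[h1 h2] := F1 m hm; have /andP[h3 h4] := F2 m hm hmk.
  apply: lerD; apply: ler_wpM2l.
  - exact: ltW.
  - exact: sq_le1.
  - exact: hr.
  - exact: sq_le2.
lra.
Qed.
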